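(* Let $L>0$, $N\ge 5$ an integer, $h=L/N$, $x_i=y_i=-\tfrac L2+ih$ for $i=0,\dots,N-1$, $\tau>0$, $p,q\in\mathbb{R}$. Let $\Gamma$ be an $L$-periodic function (extended periodically, i.e. $\Gamma(\xi)$ is evaluated as $\Gamma(((\xi+\tfrac L2)\bmod L)-\tfrac L2)$) with $\Gamma(-\xi)=\overline{\Gamma(\xi)}$, and write $\Gamma_{i,j}=\Gamma(x_i-y_j)$. Let $C$ be the $N\times N$ real symmetric circulant matrix of the fourth-order central difference second derivative with periodic boundary conditions, $(Cf)_i=\frac{-f_{i+2}+16f_{i+1}-30f_i+16f_{i-1}-f_{i-2}}{12h^2}$ (indices mod $N$), and for an $N\times N$ array $U$ define $(\mathfrak{D}_H U)_{i,j}=\sum_k C_{ik}U_{k,j}-\sum_k C_{jk}U_{i,k}$. Given an $N\times N$ Hermitian array $U^0$ ($U^0_{i,j}=\overline{U^0_{j,i}}$) and a real antisymmetric array $\Phi^{-1/2}$, define for $n\ge 0$ \[ \Phi^{n+\frac12}_{i,j}=2\bigl(U^n_{i,i}-U^n_{j,j}\bigr)-\Phi^{n-\frac12}_{i,j}, \] $U^{n+\frac12}$ as the solution of \[ U^{n+\frac12}_{i,j}-\tfrac{ip\tau}{2}(\mathfrak{D}_H U^{n+\frac12})_{i,j}-\tfrac{iq\tau}{2}\Phi^{n+\frac12}_{i,j}U^{n+\frac12}_{i,j}=U^n_{i,j}+\tfrac{iq\tau}{2}\Gamma_{i,j}\Phi^{n+\frac12}_{i,j}, \] and $U^{n+1}_{i,j}=2U^{n+\frac12}_{i,j}-U^n_{i,j}$.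 Let \[ I_0[U^n]=h^2\sum_{i=0}^{N-1}\sum_{j=0}^{N-1}\bigl|\Gamma_{i,j}+U^n_{i,j}\bigr|^2,\qquad I_1[U^n]=h\sum_{i=0}^{N-1}U^n_{i,i}. \] Then $I_0[U^{n+1}]=I_0[U^n]$ and $I_1[U^{n+1}]=I_1[U^n]$ for all $n\ge 0$.
   Context: This is the fully discrete relaxation–Crank–Nicolson scheme (fourth-order finite differences in space with periodic boundary conditions) for the equation $i\partial_t u+p(\Delta_x-\Delta_y)u+q(u(x,x,t)-u(y,y,t))(\Gamma(x-y)+u)=0$ on $[-\tfrac L2,\tfrac L2]^2$; $U^n_{i,j}$ approximates $u(x_i,y_j,n\tau)$ and $\Phi^{n+1/2}_{i,j}$ approximates $u(x_i,x_i,t)-u(y_j,y_j,t)$ at $t=(n+\tfrac12)\tau$. *)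

(* Defs.v *)
From HB Require Import structures.
From mathcomp Require Import all_boot all_order all_algebra.
From mathcomp Require Import complex.
Unset Printing Implicit Defensive.
Import Order.TTheory GRing.Theory Num.Theory.
Local Open Scope ring_scope.
Local Open Scope complex_scope.

Definition hstep {R : rcfType} (L : R) (N : nat) : R := L / N%:R.

Definition xgrid {R : rcfType} (L : R) (N : nat) (i : 'I_N) : R :=
  - (L / 2) + i%:R * hstep L N.

Definition Gam {R : rcfType} (L : R) (N : nat) (Gamma : R -> R[i]) : 'M[R[i]]_N :=
  \matrix_(i, j) Gamma (xgrid L N i - xgrid L N j).

(* fourth-order periodic second-difference matrix C:
   (Cf)_i = (-f_{i+2} + 16 f_{i+1} - 30 f_i + 16 f_{i-1} - f_{i-2}) / (12 h^2),
   indices mod N; entry C_{ik} is the coefficient of f_k in (Cf)_i. *)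
Definition ind (R : rcfType) (b : bool) : R := if b then 1 else 0.
Definition Cmat {R : rcfType} (L : R) (N : nat) : 'M[R]_N :=
  \matrix_(i, k)
   ((- ind R (k == ((i + 2) %% N)%N :> nat)
     + 16 * ind R (k == ((i + 1) %% N)%N :> nat)
     - 30 * ind R (k == i :> nat)
     + 16 * ind R (k == ((i + (N - 1)) %% N)%N :> nat)
     - ind R (k == ((i + (N - 2)) %% N)%N :> nat))
    / (12 * hstep L N ^+ 2)).

Definition DH {R : rcfType} (L : R) (N : nat) (U : 'M[R[i]]_N) : 'M[R[i]]_N :=
  \matrix_(i, j) (\sum_k ((Cmat L N i k)%:C * U k j)
                  - \sum_k ((Cmat L N j k)%:C * U i k)).

(* I_0[U] = h^2 sum_{i,j} |Gamma_{i,j} + U_{i,j}|^2 (a real number, stated in R[i]) *)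
Definition I0 {R : rcfType} (L : R) (N : nat) (Gamma : R -> R[i]) (U : 'M[R[i]]_N) : R[i] :=
  (hstep L N ^+ 2)%:C *
  \sum_i \sum_j ((Gam L N Gamma i j + U i j) * (Gam L N Gamma i j + U i j)^*).

Definition I1 {R : rcfType} (L : R) (N : nat) (U : 'M[R[i]]_N) : R[i] :=
  (hstep L N)%:C * \sum_i U i i.

(* Main.v *)
Require Import Defs.
From HB Require Import structures.
From mathcomp Require Import all_boot all_order all_algebra.
From mathcomp Require Import complex.
From mathcomp Require Import ring lra zify.
Import Order.TTheory GRing.Theory Num.Theory.
Local Open Scope ring_scope.
Local Open Scope complex_scope.
Local Open Scope ring_scope.

Lemma conjE (R : rcfType) (x : R[i]) : x^* = conjc x.
Proof. by []. Qed.

Definition mH {R : rcfType} {N : nat} (A : 'M[R[i]]_N) : 'M[R[i]]_N :=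
  (map_mx (@Num.conj _) A)^T.
Definition ip {R : rcfType} {N : nat} (A B : 'M[R[i]]_N) : R[i] :=
  \sum_i \sum_j A i j * (B i j)^*.
Definition Cc {R : rcfType} (L : R) (N : nat) : 'M[R[i]]_N :=
  map_mx (real_complex R) (Cmat L N).

Lemma conjRC (R : rcfType) (x : R) : (x%:C)^* = x%:C.
Proof. by rewrite conjE conjc_real. Qed.

Lemma mHE (R : rcfType) N (A : 'M[R[i]]_N) i j : mH A i j = (A j i)^*.
Proof. by rewrite /mH !mxE. Qed.

Lemma mHM (R : rcfType) N (A B : 'M[R[i]]_N) : mH (A *m B) = mH B *m mH A.
Proof. by rewrite /mH map_mxM trmx_mul. Qed.

Lemma mHB (R : rcfType) N (A B : 'M[R[i]]_N) : mH (A - B) = mH A - mH B.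
Proof. by rewrite /mH map_mxB linearB. Qed.

Lemma ipE (R : rcfType) N (A B : 'M[R[i]]_N) : ip A B = \tr (A *m mH B).
Proof.
rewrite /ip /mxtrace; apply: eq_bigr => i _; rewrite mxE.
by apply: eq_bigr => j _; rewrite mHE.
Qed.

Lemma conj_ip (R : rcfType) N (A B : 'M[R[i]]_N) : (ip A B)^* = ip B A.
Proof.
rewrite /ip rmorph_sum; apply: eq_bigr => i _; rewrite rmorph_sum.
by apply: eq_bigr => j _; rewrite rmorphM /= conjCK mulrC.
Qed.

Lemma ipD (R : rcfType) N (A B C : 'M[R[i]]_N) : ip A (B + C) = ip A B + ip A C.
Proof.
rewrite /ip -big_split; apply: eq_bigr => i _; rewrite -big_split.
by apply: eq_bigr => j _; rewrite mxE rmorphD mulrDr.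
Qed.

Lemma ip0 (R : rcfType) N (A : 'M[R[i]]_N) : ip A 0 = 0.
Proof.
rewrite /ip big1 // => i _; rewrite big1 // => j _.
by rewrite mxE rmorph0 mulr0.
Qed.

Lemma self_conj_zero (R : rcfType) (s t : R[i]) :
  s^* = s -> t^* = t -> s = 'i * t -> s = 0.
Proof.
move=> hs ht e.
have e2 : s = - s by rewrite -{1}hs e rmorphM /= conjCi ht mulNr.
have : s *+ 2 == 0 by rewrite mulr2n {1}e2 addNr.
by rewrite mulrn_eq0 /= => /eqP.
Qed.

Lemma ip_self_eq0 (R : rcfType) N (V : 'M[R[i]]_N) : ip V V = 0 -> V = 0.
Proof.
move=> h; apply/matrixP => i j; rewrite mxE.
have h1 : forall i, 0 <= \sum_j V i j * (V i j)^*.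
  by move=> k; apply: sumr_ge0 => l _; apply: mul_conjC_ge0.
move/eqP: h; rewrite /ip psumr_eq0; last by move=> k _; apply: h1.
move/allP/(_ i (mem_index_enum _)); rewrite /= psumr_eq0; last first.
  by move=> l _; apply: mul_conjC_ge0.
by move/allP/(_ j (mem_index_enum _)); rewrite /= mul_conjC_eq0 => /eqP.
Qed.

Lemma mod2 (a N : nat) : (a < 2 * N)%N -> (a %% N = if (a < N)%N then a else a - N)%N.
Proof.
move=> h; case: ltnP => h2; first by rewrite modn_small.
by rewrite -{1}(subnK h2) modnDr modn_small //; lia.
Qed.

Lemma modeq_sym (N i k s t : nat) : (i < N)%N -> (k < N)%N -> (s + t = N)%N ->
  (k == (i + s) %% N)%N = (i == (k + t) %% N)%N.
Proof.
move=> hi hk hst; rewrite !mod2; try lia.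
by case: ltnP => h1; case: ltnP => h2; apply/eqP/eqP => e; lia.
Qed.

Lemma Cmat_sym (R : rcfType) (L : R) N : (5 <= N)%N -> (Cmat L N)^T = Cmat L N.
Proof.
move=> hN; apply/matrixP => i k; rewrite !mxE.
have hi := ltn_ord i; have hk := ltn_ord k.
rewrite (@modeq_sym N k i 2 (N - 2)) //; last by lia.
rewrite (@modeq_sym N k i 1 (N - 1)) //; last by lia.
rewrite (@modeq_sym N k i (N - 1) 1) //; last by lia.
rewrite (@modeq_sym N k i (N - 2) 2) //; last by lia.
rewrite [(i == k :> nat)]eq_sym.
congr (_ / _); ring.
Qed.

Lemma DH_mx (R : rcfType) (L : R) N (U : 'M[R[i]]_N) :
  DH L N U = Cc L N *m U - U *m (Cc L N)^T.
Proof.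
apply/matrixP => i j; rewrite !mxE; congr (_ - _).
  by apply: eq_bigr => k _; rewrite !mxE.
by apply: eq_bigr => k _; rewrite !mxE mulrC.
Qed.

Lemma Cc_tr (R : rcfType) (L : R) N : (5 <= N)%N -> (Cc L N)^T = Cc L N.
Proof. by move=> hN; rewrite /Cc map_trmx Cmat_sym. Qed.

Lemma mH_Cc (R : rcfType) (L : R) N : (5 <= N)%N -> mH (Cc L N) = Cc L N.
Proof.
move=> hN; rewrite /mH map_trmx Cc_tr // /Cc -map_mx_comp.
by apply: eq_map_mx => x /=; rewrite conjRC.
Qed.

Lemma DH_mxS (R : rcfType) (L : R) N (U : 'M[R[i]]_N) : (5 <= N)%N ->
  DH L N U = Cc L N *m U - U *m Cc L N.
Proof. by move=> hN; rewrite DH_mx Cc_tr. Qed.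

Lemma DH_selfadj (R : rcfType) (L : R) N (A B : 'M[R[i]]_N) : (5 <= N)%N ->
  ip (DH L N A) B = ip A (DH L N B).
Proof.
move=> hN; rewrite !ipE !DH_mxS // mHB !mHM mH_Cc //.
rewrite mulmxBl mulmxBr !raddfB /=.
by rewrite -!mulmxA mxtrace_mulC -!mulmxA.
Qed.

Lemma DH_tr (R : rcfType) (L : R) N (A : 'M[R[i]]_N) : (5 <= N)%N ->
  \tr (DH L N A) = 0.
Proof.
by move=> hN; rewrite DH_mxS // raddfB /= mxtrace_mulC subrr.
Qed.

Lemma mH_DH (R : rcfType) (L : R) N (A : 'M[R[i]]_N) : (5 <= N)%N ->
  mH (DH L N A) = - DH L N (mH A).
Proof.
move=> hN; rewrite !DH_mxS // mHB !mHM mH_Cc // opprB //.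
Qed.

Lemma DHB (R : rcfType) (L : R) N (A B : 'M[R[i]]_N) :
  DH L N (A - B) = DH L N A - DH L N B.
Proof.
rewrite !DH_mx mulmxBr mulmxBl.
by apply/matrixP => i j; rewrite !mxE; ring.
Qed.

Lemma sum_ind (R : rcfType) N (m : nat) (F : nat -> R[i]) : (m < N)%N ->
  \sum_(k < N) (ind R (k == m :> nat))%:C * F k = F m.
Proof.
move=> hm; rewrite (bigD1 (Ordinal hm)) //= eqxx /ind rmorph1 mul1r.
rewrite big1 ?addr0 // => k hk; case: eqP => [e|]; last by rewrite rmorph0 mul0r.
by exfalso; move/eqP: hk; apply; apply: val_inj.
Qed.

Lemma Crow (R : rcfType) (L : R) N (i : 'I_N) (F : nat -> R[i]) : (0 < N)%N ->
  \sum_k (Cmat L N i k)%:C * F k =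
  ((12 * hstep L N ^+ 2)^-1)%:C * (- F ((i+2)%%N)%N + 16 * F ((i+1)%%N)%N
     - 30 * F i + 16 * F ((i + (N-1))%%N)%N - F ((i + (N-2))%%N)%N).
Proof.
move=> hN.
transitivity (\sum_(k < N) ((12 * hstep L N ^+ 2)^-1)%:C *
   (- ((ind R (k == ((i+2)%%N)%N :> nat))%:C * F k)
    + 16 * ((ind R (k == ((i+1)%%N)%N :> nat))%:C * F k)
    - 30 * ((ind R (k == i :> nat))%:C * F k)
    + 16 * ((ind R (k == ((i+(N-1))%%N)%N :> nat))%:C * F k)
    - ((ind R (k == ((i+(N-2))%%N)%N :> nat))%:C * F k))).
  apply: eq_bigr => k _; rewrite mxE; ring.
rewrite -mulr_sumr; congr (_ * _).
rewrite !big_split /= !sumrN -!mulr_sumr !sum_ind ?ltn_pmod //.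
Qed.

Lemma per_nat (R : rcfType) (L : R) (Gamma : R -> R[i]) :
  (forall xi, Gamma (xi + L) = Gamma xi) ->
  forall n y, Gamma (y + n%:R * L) = Gamma y.
Proof.
move=> hp; elim=> [|n IH] y; first by rewrite mul0r addr0.
by rewrite -natr1 mulrDl mul1r addrA hp IH.
Qed.

Lemma per_gen (R : rcfType) (L : R) (Gamma : R -> R[i]) :
  (forall xi, Gamma (xi + L) = Gamma xi) ->
  forall a b y, Gamma (y + a%:R * L - b%:R * L) = Gamma y.
Proof.
move=> hp a b y; rewrite addrAC per_nat //.
by rewrite -{2}(subrK (b%:R * L) y) per_nat.
Qed.

Lemma Fshift (R : rcfType) (L h : R) (N : nat) (Gamma : R -> R[i]) :
  (forall xi, Gamma (xi + L) = Gamma xi) -> N%:R * h = L ->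
  forall i j s t : nat, (s + t = N)%N ->
  Gamma ((((i + s) %% N)%N%:R - j%:R) * h) =
  Gamma ((i%:R - ((j + t) %% N)%N%:R) * h).
Proof.
move=> hp hNL i j s t hst.
have E1 := divn_eq (i + s) N; have E2 := divn_eq (j + t) N.
move: E1 E2; set q1 := ((i + s) %/ N)%N; set r1 := ((i + s) %% N)%N.
set q2 := ((j + t) %/ N)%N; set r2 := ((j + t) %% N)%N.
move=> /(congr1 (fun n => n%:R : R)) E1 /(congr1 (fun n => n%:R : R)) E2.
rewrite !natrD !natrM in E1 E2.
have hst' : s%:R = N%:R - t%:R :> R by rewrite -hst natrD addrK.
have r1E : r1%:R = i%:R + s%:R - q1%:R * N%:R :> R by rewrite E1; ring.
have r2E : r2%:R = j%:R + t%:R - q2%:R * N%:R :> R by rewrite E2; ring.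
rewrite -(@per_gen _ _ _ hp 1 (q1 + q2) ((i%:R - r2%:R) * h)).
congr Gamma; rewrite r1E r2E hst' -hNL natrD; ring.
Qed.

Lemma GamE (R : rcfType) (L : R) N (Gamma : R -> R[i]) (k j : 'I_N) :
  Gam L N Gamma k j = Gamma ((k%:R - j%:R) * hstep L N).
Proof. by rewrite mxE /xgrid; congr Gamma; ring. Qed.

Lemma DH_Gam (R : rcfType) (L : R) N (Gamma : R -> R[i]) : (5 <= N)%N ->
  (forall xi, Gamma (xi + L) = Gamma xi) ->
  DH L N (Gam L N Gamma) = 0.
Proof.
move=> hN hp.
have hNL : N%:R * hstep L N = L.
  by rewrite mulrC /hstep divfK // pnatr_eq0; lia.
have hN0 : (0 < N)%N by lia.
apply/matrixP => i j; rewrite !mxE.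
rewrite (eq_bigr (fun k : 'I_N => (Cmat L N i k)%:C *
   (fun m : nat => Gamma ((m%:R - j%:R) * hstep L N)) k)); last first.
  by move=> k _; rewrite GamE.
rewrite [X in _ - X](eq_bigr (fun k : 'I_N => (Cmat L N j k)%:C *
   (fun m : nat => Gamma ((i%:R - m%:R) * hstep L N)) k)); last first.
  by move=> k _; rewrite GamE.
rewrite (@Crow _ L N i (fun m : nat => Gamma ((m%:R - j%:R) * hstep L N))) //.
rewrite (@Crow _ L N j (fun m : nat => Gamma ((i%:R - m%:R) * hstep L N))) //=.
rewrite (@Fshift _ _ _ _ _ hp hNL i j 2 (N - 2)); last by lia.
rewrite (@Fshift _ _ _ _ _ hp hNL i j 1 (N - 1)); last by lia.
rewrite (@Fshift _ _ _ _ _ hp hNL i j (N - 1) 1); last by lia.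
rewrite (@Fshift _ _ _ _ _ hp hNL i j (N - 2) 2); last by lia.
ring.
Qed.

Lemma subE (R : rcfType) N (A B : 'M[R[i]]_N) i j : (A - B) i j = A i j - B i j.
Proof. by rewrite !mxE. Qed.

Lemma oppE (R : rcfType) N (A : 'M[R[i]]_N) i j : (- A) i j = - A i j.
Proof. by rewrite !mxE. Qed.

Lemma herm_zero (R : rcfType) (L : R) N (V P : 'M[R[i]]_N) (a b : R) :
  (5 <= N)%N -> (forall i j, (P i j)^* = P i j) ->
  (forall i j, V i j = 'i * (a%:C * DH L N V i j + b%:C * P i j * V i j)) ->
  V = 0.
Proof.
move=> hN hP hV; apply: ip_self_eq0.
pose T := \sum_i \sum_j P i j * (V i j * (V i j)^*).
apply: (@self_conj_zero _ _ (a%:C * ip (DH L N V) V + b%:C * T)).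
- by rewrite conj_ip.
- rewrite rmorphD !rmorphM /= !conjRC conj_ip -DH_selfadj //; congr (_ + _ * _).
  rewrite /T rmorph_sum; apply: eq_bigr => i _; rewrite rmorph_sum.
  by apply: eq_bigr => j _; rewrite !rmorphM /= hP conjCK; ring.
- rewrite /ip /T !mulr_sumr -big_split mulr_sumr; apply: eq_bigr => i _.
  rewrite !mulr_sumr -big_split mulr_sumr; apply: eq_bigr => j _.
  by rewrite {1}hV /=; ring.
Qed.

Lemma cross_id (R : rcfType) (c x : R[i]) :
  (c + 'i * x) * (c + 'i * x)^* - (c - 'i * x) * (c - 'i * x)^*
  = 2 * 'i * (x * c^* - (x * c^*)^*).
Proof. rewrite !(rmorphD, rmorphB, rmorphM, rmorphN) /= ?(rmorphN, rmorphM) /= conjCi conjCK; ring. Qed.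

Lemma I0_cons (R : rcfType) (L : R) N (Gamma : R -> R[i])
  (U0 U1 W P : 'M[R[i]]_N) (a b : R) :
  (5 <= N)%N -> (forall xi, Gamma (xi + L) = Gamma xi) ->
  (forall i j, (P i j)^* = P i j) ->
  (forall i j, W i j - U0 i j = 'i * (a%:C * DH L N W i j
       + b%:C * P i j * (Gam L N Gamma i j + W i j))) ->
  (forall i j, U1 i j = 2 * W i j - U0 i j) ->
  I0 L N Gamma U1 = I0 L N Gamma U0.
Proof.
move=> hN hp hP hs hU1.
set G := Gam L N Gamma; set D := DH L N W.
pose c i j := G i j + W i j.
pose X i j := a%:C * D i j + b%:C * P i j * c i j.
pose S := \sum_i \sum_j X i j * (c i j)^*.
have SE : S = a%:C * ip D (G + W) + b%:C * (\sum_i \sum_j P i j * (c i j * (c i j)^*)).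
  rewrite /S /ip !mulr_sumr -big_split; apply: eq_bigr => i _.
  rewrite !mulr_sumr -big_split; apply: eq_bigr => j _.
  by rewrite [(G + W) i j]mxE /X /c /=; ring.
have Sr : S^* = S.
  rewrite SE ipD /D DH_selfadj // DH_Gam // ip0 add0r.
  rewrite rmorphD !rmorphM /= !conjRC conj_ip -DH_selfadj //; congr (_ + _ * _).
  rewrite rmorph_sum; apply: eq_bigr => i _; rewrite rmorph_sum.
  by apply: eq_bigr => j _; rewrite !rmorphM /= hP conjCK; ring.
rewrite /I0; congr (_ * _); apply/eqP; rewrite -subr_eq0 -sumrB.
apply/eqP; transitivity (2 * 'i * (S - S^*)); last by rewrite Sr subrr mulr0.
rewrite rmorph_sum -sumrB mulr_sumr; apply: eq_bigr => i _.
rewrite rmorph_sum -!sumrB mulr_sumr; apply: eq_bigr => j _.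
have e1 : G i j + U1 i j = c i j + 'i * X i j.
  by rewrite hU1 -hs /c; ring.
have e0 : G i j + U0 i j = c i j - 'i * X i j.
  by rewrite -hs /c; ring.
by rewrite e1 e0 cross_id.
Qed.

Lemma I1_cons (R : rcfType) (L : R) N (Gamma : R -> R[i])
  (U0 U1 W P : 'M[R[i]]_N) (a b : R) :
  (5 <= N)%N -> (forall i, P i i = 0) ->
  (forall i j, W i j - U0 i j = 'i * (a%:C * DH L N W i j
       + b%:C * P i j * (Gam L N Gamma i j + W i j))) ->
  (forall i j, U1 i j = 2 * W i j - U0 i j) ->
  I1 L N U1 = I1 L N U0.
Proof.
move=> hN hP hs hU1.
rewrite /I1; congr (_ * _); apply/eqP; rewrite -subr_eq0 -sumrB; apply/eqP.
transitivity (2 * 'i * a%:C * \tr (DH L N W)); last by rewrite DH_tr // mulr0.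
rewrite /mxtrace mulr_sumr; apply: eq_bigr => i _.
have h := hs i i; rewrite hP mulr0 mul0r addr0 in h.
rewrite hU1; have -> : 2 * W i i - U0 i i - U0 i i = 2 * (W i i - U0 i i) by ring.
by rewrite h; ring.
Qed.
Lemma DH_mH (R : rcfType) (L : R) N (A : 'M[R[i]]_N) : (5 <= N)%N ->
  DH L N (mH A) = - mH (DH L N A).
Proof. by move=> hN; rewrite mH_DH // opprK. Qed.

Lemma eq_opp0 (R : rcfType) (x : R[i]) : x = - x -> x = 0.
Proof.
move=> e; have : x *+ 2 == 0 by rewrite mulr2n {1}e addNr.
by rewrite mulrn_eq0 /= => /eqP.
Qed.

Local Open Scope complex_scope.

Theorem proposition3p1 (R : rcfType) (L tau p q : R) (N : nat)
  (Gamma : R -> R[i]) (phi0 : 'M[R]_N)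
  (U Uh Phi : nat -> 'M[R[i]]_N) :
  0 < L -> (5 <= N)%N -> 0 < tau ->
  (forall xi, Gamma (xi + L) = Gamma xi) ->
  (forall xi, Gamma (- xi) = (Gamma xi)^*) ->
  (forall i j, U 0%N i j = (U 0%N j i)^*) ->
  (forall i j, phi0 i j = - phi0 j i) ->
  (forall i j, Phi 0%N i j = (phi0 i j)%:C) ->
  (forall n i j, Phi n.+1 i j = 2 * (U n i i - U n j j) - Phi n i j) ->
  (forall n i j,
     Uh n i j - 'i * (p * tau / 2)%:C * DH L N (Uh n) i j
       - 'i * (q * tau / 2)%:C * Phi n.+1 i j * Uh n i j
     = U n i j + 'i * (q * tau / 2)%:C * Gam L N Gamma i j * Phi n.+1 i j) ->
  (forall n i j, U n.+1 i j = 2 * Uh n i j - U n i j) ->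
  forall n : nat,
    I0 L N Gamma (U n.+1) = I0 L N Gamma (U n) /\ I1 L N (U n.+1) = I1 L N (U n).
Proof.
Local Open Scope ring_scope.
move=> hL hN htau hper hGc hU0 hphi hPhi0 hPhi heq hU1.
have hs : forall n i j, Uh n i j - U n i j =
    'i * ((p * tau / 2)%:C * DH L N (Uh n) i j
       + (q * tau / 2)%:C * Phi n.+1 i j * (Gam L N Gamma i j + Uh n i j)).
  move=> n i j; apply/eqP; rewrite -subr_eq0.
  have -> : Uh n i j - U n i j - 'i * ((p * tau / 2)%:C * DH L N (Uh n) i j
       + (q * tau / 2)%:C * Phi n.+1 i j * (Gam L N Gamma i j + Uh n i j))
    = (Uh n i j - 'i * (p * tau / 2)%:C * DH L N (Uh n) i j
       - 'i * (q * tau / 2)%:C * Phi n.+1 i j * Uh n i j)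
      - (U n i j + 'i * (q * tau / 2)%:C * Gam L N Gamma i j * Phi n.+1 i j)
    by ring.
  by rewrite heq subrr.
have Gc : forall i j, Gam L N Gamma i j = (Gam L N Gamma j i)^*.
  move=> i j; rewrite !mxE -[xgrid L N j - xgrid L N i]opprB hGc -conjE.
  by rewrite conjCK.
have inv : forall n, (forall i j, U n i j = (U n j i)^*) /\
    (forall i j, (Phi n i j)^* = Phi n i j) /\
    (forall i j, Phi n i j = - Phi n j i).
  elim=> [|n [hU [hPr hPa]]].
    split; first exact: hU0.
    by split => i j; rewrite !hPhi0 ?conjRC // hphi rmorphN.
  have hPr' : forall i j, (Phi n.+1 i j)^* = Phi n.+1 i j.
    move=> i j; rewrite hPhi !(rmorphB, rmorphM) /= rmorph_nat hPr.
    by rewrite -(hU i i) -(hU j j).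
  have hPa' : forall i j, Phi n.+1 i j = - Phi n.+1 j i.
    by move=> i j; rewrite !hPhi (hPa i j); ring.
  have hW : forall i j, Uh n i j = (Uh n j i)^*.
    have hV : forall k l, (Uh n - mH (Uh n)) k l = 'i * ((p * tau / 2)%:C *
        DH L N (Uh n - mH (Uh n)) k l + (q * tau / 2)%:C * Phi n.+1 k l *
        (Uh n - mH (Uh n)) k l).
    move=> k l; rewrite DHB !subE DH_mH // oppE !mHE.
    have h1 := hs n k l.
    have h2 : (Uh n l k)^* - U n k l = - 'i * ((p * tau / 2)%:C *
        (DH L N (Uh n) l k)^* - (q * tau / 2)%:C * Phi n.+1 k l *
        (Gam L N Gamma k l + (Uh n l k)^*)).
      rewrite (hU k l) (hPa' k l) (Gc k l) -rmorphB hs.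
      rewrite !(rmorphM, rmorphD) /= conjCi !conjRC hPr'; ring.
    apply/eqP; rewrite -subr_eq0.
    set A := 'i * _.
    set B := - 'i * _ in h2.
    have -> : Uh n k l - (Uh n l k)^* - A =
       ((Uh n k l - U n k l) - 'i * ((p * tau / 2)%:C * DH L N (Uh n) k l
       + (q * tau / 2)%:C * Phi n.+1 k l * (Gam L N Gamma k l + Uh n k l)))
       - (((Uh n l k)^* - U n k l) - B) by rewrite /A /B; ring.
    by rewrite h1 h2 !subrr.
    have V0 := @herm_zero _ L N (Uh n - mH (Uh n)) (Phi n.+1)
       (p * tau / 2) (q * tau / 2) hN hPr' hV.
    move=> i j.
    have := congr1 (fun M : 'M[R[i]]_N => M i j) V0.
    rewrite subE mHE /= mxE.
    by move/eqP; rewrite subr_eq0 => /eqP.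
  split.
    by move=> i j; rewrite !hU1 rmorphB rmorphM /= rmorph_nat -(hW i j) -(hU i j).
  by split.
move=> n; have [hU [hPr hPa]] := inv n; have [_ [hPr' hPa']] := inv n.+1.
split.
  exact: (@I0_cons _ L N Gamma (U n) (U n.+1) (Uh n) (Phi n.+1)
    (p * tau / 2) (q * tau / 2) hN hper hPr' (hs n) (hU1 n)).
apply: (@I1_cons _ L N Gamma (U n) (U n.+1) (Uh n) (Phi n.+1)
    (p * tau / 2) (q * tau / 2) hN _ (hs n) (hU1 n)).
by move=> i; apply: eq_opp0; apply: hPa'.
Qed.
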